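(* Let $p_{NS}\in(0,1)$ and let $p_0$ be such that $p_{NS}=p_0(1-p_0)^{(1-p_0)/p_0}$. Let $P$ be a probability distribution on a finite set $\mathcal{I}$ with $\min_{i\in\sup(P)}P(i)\ge p_{NS}$. Then for every minimizer $Q^*$ of $\mathrm{KL}_b(P\|\cdot)$ over semi-distributions and every $i\in\sup(Q^* )$, $$\frac{Q^*(i)}{P(i)}\le\frac{p_0}{(1-p_0)p_{NS}}<\frac{3}{1-p_0}.$$
   Context: A semi-distribution on $\mathcal{I}$ is $W:\mathcal{I}\to[0,1]$ with $\sum_iW(i)\le1$ and support $\sup(W)=\{i:W(i)>0\}$; a probability distribution is one summing to $1$. Bounded KL with threshold $p_{NS}$: $\mathrm{KL}_b(P\|Q):=\sum_{i\in\sup(P)}P(i)\ln\frac{P(i)}{\max(Q(i),p_{NS})}$. *)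

(* Defs.v *)
From HB Require Import structures.
From mathcomp Require Import all_boot all_order all_algebra.
From mathcomp Require Import all_classical all_reals all_analysis.
Set Implicit Arguments. Unset Strict Implicit. Unset Printing Implicit Defensive.
Import Order.TTheory GRing.Theory Num.Theory.
Local Open Scope ring_scope.

Definition semi_distribution (R : realType) (I : finType) (W : I -> R) : Prop :=
  (forall i, 0 <= W i <= 1) /\ \sum_(i : I) W i <= 1.

Definition prob_distribution (R : realType) (I : finType) (W : I -> R) : Prop :=
  (forall i, 0 <= W i <= 1) /\ \sum_(i : I) W i = 1.

Definition supp (R : realType) (I : finType) (W : I -> R) : pred I :=
  fun i => 0 < W i.

Definition KLb (R : realType) (I : finType) (pNS : R) (P Q : I -> R) : R :=
  \sum_(i in supp P) P i * ln (P i / Num.max (Q i) pNS).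

Definition KLb_minimizer (R : realType) (I : finType) (pNS : R) (P Q : I -> R) : Prop :=
  semi_distribution Q /\
  forall W : I -> R, semi_distribution W -> KLb pNS P Q <= KLb pNS P W.

(* Main.v *)
Require Import Defs.
From mathcomp Require Import all_boot all_order all_algebra.
From mathcomp Require Import all_classical all_reals all_analysis.
From mathcomp Require Import ring lra.
Import Order.TTheory GRing.Theory Num.Theory.
Local Open Scope ring_scope.

Section Helpers.
Variable R : realType.
Implicit Types a b x y z : R.

Lemma lnB x y : 0 < x -> 0 < y -> ln x - ln y = ln (x / y).
Proof.
move=> hx hy; rewrite lnM ?posrE ?invr_gt0 // lnV ?posrE //.
Qed.

Lemma ln_lt_sub1 y : 0 < y -> y != 1 -> ln y < y - 1.
Proof.
move=> hy hy1.
have h0 : ln y != 0 by rewrite ln_eq0.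
have := expR_gt1Dx h0; rewrite lnK ?posrE //; lra.
Qed.

Lemma ln_le_sub1 y : 0 < y -> ln y <= y - 1.
Proof.
move=> hy; have := @le_ln1Dx R (y - 1).
rewrite addrCA subrr addr0; apply; lra.
Qed.

Lemma gibbs a b : 0 < a -> 0 < b -> a - b <= a * (ln a - ln b).
Proof.
move=> ha hb; have := ln_le_sub1 _ (divr_gt0 hb ha).
rewrite -lnB // => h.
have : a * (ln b - ln a) <= a * (b / a - 1) by rewrite ler_pM2l.
rewrite [a * (b / a - 1)]mulrBr mulr1 mulrCA divff ?gt_eqF // mulr1; lra.
Qed.

Lemma gibbs_lt a b : 0 < a -> 0 < b -> a != b -> a - b < a * (ln a - ln b).
Proof.
move=> ha hb hab.
have hba : b / a != 1.
  apply/negP => /eqP h; move/eqP: hab; apply.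
  by move/(congr1 (fun t => t * a)): h; rewrite mul1r divfK ?gt_eqF.
have := ln_lt_sub1 _ (divr_gt0 hb ha) hba.
rewrite -lnB // => h.
have : a * (ln b - ln a) < a * (b / a - 1) by rewrite ltr_pM2l.
rewrite [a * (b / a - 1)]mulrBr mulr1 mulrCA divff ?gt_eqF // mulr1; lra.
Qed.

Lemma term_ge a x y z : 0 < a -> 0 < x -> x <= y -> 0 < z ->
  a * (ln x - ln z) <= a * ln (a / z) - a * ln (a / y).
Proof.
move=> ha hx hxy hz; have hy : 0 < y by apply: lt_le_trans hxy.
rewrite -!lnB // -mulrBr ler_pM2l //.
have : ln x <= ln y by rewrite ler_ln ?posrE.
lra.
Qed.

Lemma e_lt3 : expR (1 : R) < 3.
Proof.
have h6 : (1 : R) = 6%:R * (6%:R^-1) by rewrite divff.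
have hpos : (0 : R) < 6%:R^-1 by rewrite invr_gt0.
have hx : - (6%:R^-1 : R) != 0 by rewrite oppr_eq0 gt_eqF.
have := expR_gt1Dx hx; rewrite expRN => h.
have h1 : expR (6%:R^-1 : R) < 6%:R / 5%:R.
  have hE : 0 < expR (6%:R^-1 : R) := expR_gt0 _.
  rewrite -(invrK (expR _)) -[6%:R / 5%:R]invf_div ltf_pV2 ?posrE ?invr_gt0 ?divr_gt0 //.
  apply: le_lt_trans h.
  rewrite ler_pdivrMr // mulrDl mul1r mulNr.
  rewrite mulVf //; lra.
have -> : expR (1 : R) = expR (6%:R^-1 : R) ^+ 6 by rewrite -expRM_natl mulfV.
apply: (@lt_trans _ _ ((6%:R / 5%:R) ^+ 6)).
  by rewrite ltrXn2r // ?expR_ge0 // divr_ge0.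
rewrite expr_div_n ltr_pdivrMr ?exprn_gt0 //.
by rewrite -!natrX -natrM ltr_nat.
Qed.

End Helpers.

Theorem lemma11 (R : realType) (I : finType) (pNS p0 : R) (P Qs : I -> R) :
  0 < pNS < 1 ->
  0 < p0 < 1 ->
  pNS = p0 * powR (1 - p0) ((1 - p0) / p0) ->
  prob_distribution P ->
  (forall i, i \in supp P -> pNS <= P i) ->
  KLb_minimizer pNS P Qs ->
  forall i, i \in supp Qs ->
    Qs i / P i <= p0 / ((1 - p0) * pNS) /\
    p0 / ((1 - p0) * pNS) < 3 / (1 - p0).
Proof.
move=> /andP[q0 q1] /andP[p00 p01] Hqdef [HP HP1] HPq [[HQ HQ1] Hmin] i Hi.
have inS (W : I -> R) k : (k \in supp W) = (0 < W k) by [].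
set E := powR (1 - p0) ((1 - p0) / p0) in Hqdef.
set L := ln (1 - p0).
have L0 : L < 0 by rewrite /L ln_lt0 //; apply/andP; split; lra.
have E0 : 0 < E by rewrite /E powR_gt0 //; lra.
have lnE : ln E = (1 - p0) / p0 * L by rewrite /E ln_powR.
have E1 : E < 1.
  rewrite -(@ltr_ln R) ?posrE // ln1 lnE pmulr_rlt0 //.
  by rewrite divr_gt0 //; lra.
have keyL : - ((1 - p0) * L) <= p0.
  have := @gibbs R (1 - p0) 1 ltac:(lra) ltac:(lra).
  rewrite ln1 subr0 -/L; lra.
have nlnE : - ln E <= 1.
  rewrite lnE mulrAC -mulNr ler_pdivrMr // mul1r; lra.
set s0 := (1 - p0) * E.
have s00 : 0 < s0 by rewrite mulr_gt0 //; lra.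
have s01 : s0 < 1.
  rewrite /s0; have : (1 - p0) * E < 1 * 1 by rewrite ltr_pM //; lra. lra.
have BE : p0 / ((1 - p0) * pNS) = s0^-1.
  rewrite Hqdef /s0 mulrCA invfM mulrA divff ?gt_eqF // mul1r.
  by rewrite invfM mulrC.
have B1 : 1 <= s0^-1 by rewrite invf_ge1 // ltW.
split; last first.
  rewrite BE /s0 invfM mulrC ltr_pM2r ?invr_gt0; last lra.
  have -> : E^-1 = expR (- ln E) by rewrite expRN lnK ?posrE.
  apply: le_lt_trans (e_lt3 R); by rewrite ler_expR.
rewrite BE.
have Pge k : 0 <= P k by case/andP: (HP k).
have Qge k : 0 <= Qs k by case/andP: (HQ k).
have [Pi0|Pi0] := leP (P i) 0.
  have -> : P i = 0 by apply/eqP; rewrite eq_le Pi0 Pge.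
  by rewrite invr0 mulr0 ltW // invr_gt0.
have [Qiq|Qiq] := leP (Qs i) pNS.
  apply: le_trans B1; rewrite ler_pdivrMr // mul1r.
  apply: le_trans Qiq _; exact: HPq.
pose T k := (0 < P k) && (pNS < Qs k).
have Ti : T i by rewrite /T Pi0 Qiq.
set s := \sum_(k | T k) P k.
have Ps k : T k -> P k <= s.
  by move=> Tk; rewrite /s (bigD1 k) //= lerDl sumr_ge0.
have s0pos : 0 < s by apply: lt_le_trans (Ps i Ti).
have sumQT : \sum_(k | T k) Qs k <= 1.
  apply: le_trans HQ1; rewrite [X in _ <= X](bigID T) /= lerDl sumr_ge0 //.
have TQ k : T k -> 0 < Qs k by case/andP => _ h; apply: lt_trans h.
have TP k : T k -> 0 < P k by case/andP.
pose D k := P k * (ln (P k) - ln (s * Qs k)).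
pose d := D i - (P i - s * Qs i).
have gibbsT : d <= \sum_(k | T k) D k.
  have -> : \sum_(k | T k) D k =
     \sum_(k | T k) (D k - (P k - s * Qs k)) + (s - s * \sum_(k | T k) Qs k).
    have -> : s - s * \sum_(k | T k) Qs k = \sum_(k | T k) (P k - s * Qs k).
      by rewrite sumrB mulr_sumr.
    rewrite -big_split /=.
    by apply: eq_bigr => k _; rewrite subrK.
  have h2 : 0 <= s - s * \sum_(k | T k) Qs k.
    rewrite subr_ge0 -[X in _ <= X]mulr1 ler_pM2l //.
  rewrite -[d]addr0; apply: lerD => //.
  rewrite (bigD1 i) //= lerDl sumr_ge0 // => k /andP[Tk _].
  by rewrite subr_ge0 gibbs ?mulr_gt0 ?TP ?TQ.
have d0 : 0 <= d by rewrite subr_ge0 gibbs ?mulr_gt0 ?TP ?TQ.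
have maxQ k : T k -> Num.max (Qs k) pNS = Qs k.
  by move=> /andP[_ h]; rewrite max_l // ltW.
have maxQn k : ~~ T k -> 0 < P k -> Num.max (Qs k) pNS = pNS.
  by rewrite /T => /negP hT hP; rewrite max_r //; rewrite leNgt; apply/negP => h; apply: hT; rewrite hP h.
have ltrK : forall W : I -> R, semi_distribution W ->
    \sum_(k : I) (if 0 < P k then P k * ln (P k / Num.max (Qs k) pNS) -
          P k * ln (P k / Num.max (W k) pNS) else 0) <= 0.
  move=> W hW; have := Hmin W hW; rewrite /KLb -subr_le0 -sumrB big_mkcond /=.
  by [].
have [s0s|ss0] := leP s0 s.
  pose W k := if T k then P k / s else 0.
  have hW : semi_distribution W.
    split.
      move=> k; rewrite /W; case: ifP => Tk; last by rewrite lexx ler01.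
      apply/andP; split; first by rewrite divr_ge0 ?Pge ?ltW.
      by rewrite ler_pdivrMr // mul1r Ps.
    rewrite /W -big_mkcond /= -mulr_suml divff ?gt_eqF //.
  have := ltrK W hW => hK.
  have : \sum_(k | T k) D k <= 0.
    apply: le_trans hK; rewrite [X in X <= _]big_mkcond /=; apply: ler_sum => k _.
    rewrite /W; case: ifP => Tk.
      rewrite TP // maxQ //.
      have ht := @term_ge R (P k) (P k / s) (Num.max (P k / s) pNS) (Qs k) (TP k Tk)
        ltac:(by rewrite divr_gt0 ?TP) ltac:(by rewrite le_max lexx) (TQ k Tk).
      apply: le_trans ht.
      rewrite /D lnM ?posrE ?TQ // lnM ?posrE ?invr_gt0 ?TP // lnV ?posrE //.
      by rewrite opprD addrA lexx.
    case: ifP => // hP; rewrite (maxQn k (negbT Tk) hP) max_r ?subrr //.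
    exact: ltW.
  move=> hD; have di0 : d <= 0 by apply: le_trans gibbsT hD.
  have hd : d = 0 by apply/eqP; rewrite eq_le di0 d0.
  have hPs : P i = s * Qs i.
    apply/eqP; apply/negPn/negP => hne.
    have := @gibbs_lt R _ _ Pi0 (mulr_gt0 s0pos (TQ i Ti)) hne.
    rewrite -/(D i); move: hd; rewrite /d; lra.
  rewrite hPs invfM mulrCA mulfV ?gt_eqF ?TQ // mulr1.
  by rewrite lef_pV2 ?posrE.
exfalso.
have [j /andP[Pj Qj]] : exists j, (0 < P j) && ~~ (pNS < Qs j).
  case: (pickP (fun k => (0 < P k) && ~~ (pNS < Qs k))) => [j hj | hnone].
    by exists j.
  have : s = 1.
    rewrite -HP1 /s big_mkcond /=; apply: eq_bigr => k _.
    case: ifP => // Tk; have := hnone k; rewrite /= /T in Tk *.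
    case: (ltP 0 (P k)) Tk => hPk /=.
      by case: (ltP pNS (Qs k)).
    by move=> _ _; apply/eqP; rewrite eq_le hPk Pge.
  lra.
have Tj : ~~ T j by rewrite /T Pj.
pose W k := (if T k then (1 - p0) * P k / s else 0) + (if k == j then p0 else 0).
have hW : semi_distribution W.
  split.
    move=> k; rewrite /W; case: ifP => Tk.
      have -> : (k == j) = false by apply/negP => /eqP ekj; move: Tj; rewrite -ekj Tk.
      rewrite addr0; apply/andP; split.
        apply: mulr_ge0; last by rewrite invr_ge0; exact: ltW.
        apply: mulr_ge0; [lra | exact: Pge].
      rewrite -mulrA; apply: (@le_trans _ _ (1 * 1)); last by rewrite mul1r.
      apply: ler_pM; [lra | by rewrite divr_ge0 ?Pge ?ltW | lra |].
      by rewrite ler_pdivrMr // mul1r Ps.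
    rewrite add0r; case: ifP => _; last by rewrite lexx ler01.
    apply/andP; split; lra.
  rewrite /W big_split /= -big_mkcond /= -[X in _ + X]big_mkcond big_pred1_eq /=.
  rewrite -mulr_suml -mulr_sumr -/s -mulrA divff ?gt_eqF // mulr1; lra.
have := ltrK W hW => hK.
have qp0 : pNS < p0.
  by rewrite Hqdef -[X in _ < X]mulr1 ltr_pM2l.
have hc : pNS * (ln p0 - ln pNS) = - (s0 * L).
  rewrite Hqdef lnM ?posrE // lnE /s0; field; lra.
have : \sum_(k | T k) (P k * L + D k) + pNS * (ln p0 - ln pNS) <= 0.
  apply: le_trans hK; rewrite [\sum_(k | T k) _]big_mkcond /=.
  have -> : pNS * (ln p0 - ln pNS) = \sum_k (if k == j then pNS * (ln p0 - ln pNS) else 0).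
    by rewrite -big_mkcond big_pred1_eq.
  rewrite -big_split /=; apply: ler_sum => k _.
  rewrite /W; case: ifP => Tk.
    have -> : (k == j) = false by apply/negP => /eqP ekj; move: Tj; rewrite -ekj Tk.
    rewrite !addr0 TP // maxQ //.
    have ht := @term_ge R (P k) ((1 - p0) * P k / s) (Num.max ((1 - p0) * P k / s) pNS) (Qs k) (TP k Tk)
        ltac:(by rewrite mulr_gt0 ?invr_gt0 ?TP // mulr_gt0 ?TP // subr_gt0) ltac:(by rewrite le_max lexx) (TQ k Tk).
    apply: le_trans ht.
    rewrite /D -mulrDr lnM ?posrE ?TQ // lnM ?posrE ?mulr_gt0 ?invr_gt0 ?TP //; last lra.
    rewrite lnM ?posrE ?TP //; last lra.
    rewrite lnV ?posrE //.
    by rewrite -/L opprD !addrA lexx.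
  rewrite !add0r; case: ifP => [/eqP ekj | nkj].
    subst k; rewrite Pj maxQn // max_l; last exact: ltW.
    apply: le_trans (_ : P j * (ln p0 - ln pNS) <= _).
      rewrite ler_wpM2r ?HPq //; rewrite subr_ge0 ler_ln ?posrE //; exact: ltW.
    by apply: term_ge.
  case: ifP => // hP; rewrite (maxQn k (negbT Tk) hP) max_r ?subrr //.
  exact: ltW.
rewrite big_split /= -mulr_suml -/s hc => h.
have : 0 < (s0 - s) * (- L) by rewrite mulr_gt0 // ?subr_gt0 // oppr_gt0.
have -> : (s0 - s) * (- L) = s * L - s0 * L by ring.
lra.
Qed.
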